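(* Let $p$ be a lambda skeleton and suppose $[\Gamma]t \in \Lambda_1^0(p)$ and $[\Delta]u \in \Lambda_1^0(p)$ are two planar lambda terms decorating the same skeleton $p$. Then $[\Gamma]t$ and $[\Delta]u$ are $\alpha$-equivalent.
   Context: Lambda skeletons: graded sets $\mathrm{SLam}(i)$, $i\in\mathbb{N}$, defined as the least sets such that $\_ \in \mathrm{SLam}(1)$; if $p\in\mathrm{SLam}(j)$ and $q\in\mathrm{SLam}(k)$ then $p(q)\in\mathrm{SLam}(j+k)$; if $p\in\mathrm{SLam}(i+1)$ then $\lambda\_.p\in\mathrm{SLam}(i)$. (They are unary-binary trees whose leaves are the placeholders $\_$.) A pseudo lambda term is a skeleton in which every occurrence of $\_$ (both leaves and the placeholders after $\lambda$) is replaced by a variable name. Given a list of variable names $\Gamma$ and a pseudo term $t$, the judgment $[\Gamma]t\in\Lambda_1^0(p)$ (''$t$ is a planar lambda term with free variables $\Gamma$ decorating $p$'') is defined by the rules: $[x]x\in\Lambda_1^0(\_)$; if $[\Gamma]t\in\Lambda_1^0(p)$ and $[\Delta]u\in\Lambda_1^0(q)$ then $[\Gamma,\Delta]t(u)\in\Lambda_1^0(p(q))$; if $[x,\Gamma]t\in\Lambda_1^0(p)$ then $[\Gamma]\lambda x.t\in\Lambda_1^0(\lambda\_.p)$. Two such terms $[\Gamma]t$, $[\Delta]u$ are $\alpha$-equivalent if one is obtained from the other by renaming variables (both the variables in the list of free variables and the variables bound by $\lambda$ inside the term). *)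

(* Defs.v *)
From Stdlib Require Import List.
Import ListNotations.
Set Implicit Arguments.

Inductive skel : Type :=
  | SHole : skel
  | SApp : skel -> skel -> skel
  | SAbs : skel -> skel.

Inductive SLam : nat -> skel -> Prop :=
  | SLam_hole : SLam 1 SHole
  | SLam_app : forall j k p q, SLam j p -> SLam k q -> SLam (j + k) (SApp p q)
  | SLam_abs : forall i p, SLam (S i) p -> SLam i (SAbs p).

Inductive pterm (V : Type) : Type :=
  | Var : V -> pterm V
  | App : pterm V -> pterm V -> pterm V
  | Lam : V -> pterm V -> pterm V.
Arguments Var {V} _.
Arguments App {V} _ _.
Arguments Lam {V} _ _.

Inductive planar {V : Type} : list V -> pterm V -> skel -> Prop :=
  | planar_var : forall x, planar [x] (Var x) SHole
  | planar_app : forall G D t u p q,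
      planar G t p -> planar D u q -> planar (G ++ D) (App t u) (SApp p q)
  | planar_lam : forall x G t p,
      planar (x :: G) t p -> planar G (Lam x t) (SAbs p).

(* Alpha-equivalence of planar terms: [Γ]t and [Δ]u are alpha-equivalent
   when u (with Δ) is obtained from t (with Γ) by renaming each declared
   variable (each entry of the free-variable list, each λ-binder) together
   with its occurrence.  [aeq ρ t u] records in ρ the pairs (old name, new
   name) of the free variables, positionally, as in the judgment rules. *)
Inductive aeq {V : Type} : list (V * V) -> pterm V -> pterm V -> Prop :=
  | aeq_var : forall x y, aeq [(x, y)] (Var x) (Var y)
  | aeq_app : forall r1 r2 t t' u u',
      aeq r1 t t' -> aeq r2 u u' -> aeq (r1 ++ r2) (App t u) (App t' u')
  | aeq_lam : forall x y r t t',
      aeq ((x, y) :: r) t t' -> aeq r (Lam x t) (Lam y t').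

Definition alpha_equiv {V : Type} (G : list V) (t : pterm V)
    (D : list V) (u : pterm V) : Prop :=
  exists r : list (V * V), map fst r = G /\ map snd r = D /\ aeq r t u.

(* Main.v *)
Require Import Defs.
From Stdlib Require Import List.
Import ListNotations.

Lemma planar_alpha (V : Type) (G : list V) (t : pterm V) (p : skel) :
  planar G t p -> forall D u, planar D u p -> alpha_equiv G t D u.
Proof.
  induction 1 as [x|G1 D1 t1 u1 p1 q1 H1 IH1 H2 IH2|x G1 t1 p1 H1 IH1];
    intros D' u' Hu; inversion Hu; subst.
  - exists [(x, x0)]; repeat split; constructor.
  - match goal with
      | A : planar _ _ p1, B : planar _ _ q1 |- _ =>
        destruct (IH1 _ _ A) as [r1 [a1 [b1 c1]]];
        destruct (IH2 _ _ B) as [r2 [a2 [b2 c2]]] end.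
    exists (r1 ++ r2); rewrite !map_app; subst; repeat split; now constructor.
  - match goal with
      | A : planar _ _ p1 |- _ => destruct (IH1 _ _ A) as [r [a [b c]]] end.
    destruct r as [|[x1 y1] r]; [discriminate|].
    simpl in a, b; injection a; injection b; intros; subst.
    exists r; repeat split; now constructor.
Qed.

Theorem proposition2p4 (V : Type) (i : nat) (p : skel) (Hp : SLam i p)
    (G D : list V) (t u : pterm V) :
  planar G t p -> planar D u p -> alpha_equiv G t D u.
Proof.
  intros H1 H2; eapply planar_alpha; eauto.
Qed.
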